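(* Let $(N^\circ,M^\circ,L^\circ)\in OLag(V)^3$ be a triple of oriented Lagrangians which are pairwise in general position (i.e. $N+M=M+L=N+L=V$). Then $$T_{N^\circ,L^\circ}=T_{N^\circ,M^\circ}\circ T_{M^\circ,L^\circ}$$ as maps $\mathcal H_{L^\circ}\to\mathcal H_{N^\circ}$.
   Context: Let $p$ be an odd prime, $q$ a power of $p$, and $(V,\omega)$ a symplectic vector space of dimension $2n$ over $\mathbb F_q$. The Heisenberg group $H(V)$ is the set $V\times\mathbb F_q$ with multiplication $(v,z)\cdot(v',z')=(v+v',z+z'+\tfrac12\omega(v,v'))$; its center is $Z=\{(0,z):z\in\mathbb F_q\}$. Fix a non-trivial character $\psi:\mathbb F_q\to\mathbb C^\times$. An isotropic subspace $I\subset V$ is regarded as the subgroup $\{(i,0):i\in I\}$ of $H(V)$. An oriented Lagrangian is a pair $L^\circ=(L,o_L)$ with $L\subset V$ a Lagrangian subspace and $o_L\in\bigwedge^nL$ nonzero; $OLag(V)$ denotes the set of oriented Lagrangians. For $L^\circ\in OLag(V)$, $\mathcal H_{L^\circ}$ is the space of functions $f:H(V)\to\mathbb C$ with $f((0,z)\cdot(l,0)\cdot h)=\psi(z)f(h)$ for all $z\in\mathbb F_q$, $l\in L$, $h\in H(V)$, on which $H(V)$ acts by right translation $(\pi_{L^\circ}(h)f)(h')=f(h'h)$. For a $2k$-dimensional symplectic space $(W,\omega)$ and Lagrangians $A,B\subset W$, define $\omega_\wedge:\bigwedge^kA\times\bigwedge^kB\to\mathbb F_q$ by $\omega_\wedge(a_1\wedge\dots\wedge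 a_k,\,b_1\wedge\dots\wedge b_k)=(-1)^{k(k-1)/2}\det\big(\omega(a_i,b_j)\big)_{i,j}$. Let $\sigma$ be the Legendre character of $\mathbb F_q^\times$ (the unique character of order $2$) and $G_1=\sum_{z\in\mathbb F_q}\psi(\tfrac12z^2)$. Lagrangians $M,L$ are in general position if $M+L=V$. For $(M^\circ,L^\circ)$ in general position define $F_{M^\circ,L^\circ}:\mathcal H_{L^\circ}\to\mathcal H_{M^\circ}$ by $F_{M^\circ,L^\circ}[f](h)=\sum_{m\in M}f((m,0)\cdot h)$, the constant $A_{M^\circ,L^\circ}=(G_1/q)^n\,\sigma\big((-1)^{n(n-1)/2}\omega_\wedge(o_L,o_M)\big)$, and $T_{M^\circ,L^\circ}=A_{M^\circ,L^\circ}\cdot F_{M^\circ,L^\circ}$. *)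

(* Defs.v *)
From HB Require Import structures.
From mathcomp Require Import all_boot all_order all_algebra all_field.
Set Implicit Arguments. Unset Strict Implicit. Unset Printing Implicit Defensive.
Import GRing.Theory Num.Theory.
Local Open Scope ring_scope.

(* The symplectic space V of dimension 2n over the finite field F is modelled
   as F^(n+n) (row vectors), with omega(u,v) = u J v^T for a matrix J. *)
Section Heisenberg.
Variables (F : finFieldType) (n : nat) (J : 'M[F]_(n + n)).

Definition vec := 'rV[F]_(n + n).

Definition omega (u v : vec) : F := (u *m J *m v^T) 0 0.

(* omega is alternating and nondegenerate (bilinearity is automatic). *)
Definition symplectic : Prop :=
  (forall v : vec, omega v v = 0) /\
  (forall u : vec, (forall v : vec, omega u v = 0) -> u = 0).

Definition heis := (vec * F)%type.
Definition hmul (h h' : heis) : heis :=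
  (h.1 + h'.1, h.2 + h'.2 + 2^-1 * omega h.1 h'.1).

(* An oriented Lagrangian (L, o_L) is represented by an n x 2n matrix B whose
   rows b_1..b_n form a basis of L, with o_L = b_1 /\ ... /\ b_n. *)
Definition olag (B : 'M[F]_(n, n + n)) : Prop :=
  row_free B /\
  (forall u v : vec, (u <= B)%MS -> (v <= B)%MS -> omega u v = 0).

Definition gen_pos (BM BL : 'M[F]_(n, n + n)) : Prop :=
  (1%:M <= BM + BL)%MS.

(* omega_wedge (a_1/\../\a_n, b_1/\../\b_n) = (-1)^(n(n-1)/2) det(omega(a_i,b_j)) *)
Definition omega_wedge (A B : 'M[F]_(n, n + n)) : F :=
  (-1) ^+ (n * (n - 1) %/ 2)%N *
  \det (\matrix_(i < n, j < n) omega (row i A) (row j B)).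

Definition legendre (x : F) : algC :=
  if x == 0 then 0 else if [exists y : F, y ^+ 2 == x] then 1 else -1.

Definition nontriv_char (psi : F -> algC) : Prop :=
  (forall a, psi a != 0) /\
  (forall a b, psi (a + b) = psi a * psi b) /\
  (exists a, psi a != 1).

Definition G1 (psi : F -> algC) : algC := \sum_(z : F) psi (2^-1 * z ^+ 2).

Definition inH (psi : F -> algC) (BL : 'M[F]_(n, n + n)) (f : heis -> algC)
  : Prop :=
  forall (z : F) (l : vec) (h : heis), (l <= BL)%MS ->
    f (hmul (hmul (0, z) (l, 0)) h) = psi z * f h.

Definition Fmap (BM : 'M[F]_(n, n + n)) (f : heis -> algC) : heis -> algC :=
  fun h => \sum_(m : vec | (m <= BM)%MS) f (hmul (m, 0) h).

Definition Acoef (psi : F -> algC) (BM BL : 'M[F]_(n, n + n)) : algC :=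
  (G1 psi / (#|F|%:R)) ^+ n *
  legendre ((-1) ^+ (n * (n - 1) %/ 2)%N * omega_wedge BL BM).

Definition Tmap (psi : F -> algC) (BM BL : 'M[F]_(n, n + n))
  (f : heis -> algC) : heis -> algC :=
  fun h => Acoef psi BM BL * Fmap BM f h.

End Heisenberg.

(* Main.v *)
Require Import Defs.
From HB Require Import structures.
From mathcomp Require Import all_boot all_order all_algebra all_field all_fingroup all_solvable ssrAC.
Set Implicit Arguments. Unset Strict Implicit. Unset Printing Implicit Defensive.
Import GRing.Theory Num.Theory.
Local Open Scope ring_scope.

Open Scope group_scope.
Open Scope ring_scope.

Lemma even_card_unit (F : finFieldType) : (2%:R : F) != 0 -> (2 %| #|F|.-1)%N.
Proof.
move=> h2.
have um1 : (-1 : F) \is a GRing.unit by rewrite unitrN1.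
pose u := FinRing.Unit um1.
have u1 : u != 1%g.
  apply/eqP=> /(congr1 val) /= /eqP.
  rewrite eq_sym -subr_eq0 opprK.
  by move: h2; rewrite -[2%:R]/(1 + 1 : F) => /negPf ->.
have u2 : (u ^+ 2 == 1)%g.
  apply/eqP; apply: val_inj; rewrite FinRing.val_unitX /=.
  by rewrite expr2 mulrNN mulr1.
rewrite -card_finField_unit.
have hd : (#[u] %| 2)%N by rewrite order_dvdn.
have ho : #[u] = 2%N.
  have : #[u] != 1%N by rewrite order_eq1.
  have := dvdn_leq (isT : (0 < 2)%N) hd; have := order_gt0 u.
  by case: #[u] => [|[|[|]]].
by rewrite -ho order_dvdG // inE.
Qed.

Lemma leg_gen (F : finFieldType) : (2%:R : F) != 0 ->
  exists g : F, g != 0 /\ (forall x : F, x != 0 -> exists k, x = g ^+ k) /\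
    forall k, legendre (g ^+ k) = (-1) ^+ k.
Proof.
move=> h2.
have /cyclicP [gu Hg] := field_unit_group_cyclic [set: {unit F}]%G.
have gu_ord : #[gu]%g = #|F|.-1 by rewrite orderE -Hg card_finField_unit.
have gnz : val gu != 0 by rewrite -unitfE (valP gu).
have hx : forall x : F, x != 0 -> exists k, x = val gu ^+ k.
  move=> x xnz; pose u := finField_unit xnz.
  have : u \in <[gu]>%g by rewrite -Hg inE.
  case/cycleP=> k hk; exists k.
  by rewrite -FinRing.val_unitX -hk.
exists (val gu); split => //; split => // k.
rewrite /legendre expf_eq0 (negPf gnz) andbF.
case: (boolP (odd k)) => ok.
  case: existsP => [[y /eqP hy]|]; last by rewrite -signr_odd ok expr1.
  exfalso.
  have ynz : y != 0.
    apply/eqP=> y0; move: hy; rewrite y0 expr0n /= => /esym /eqP.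
    by rewrite expf_eq0 (negPf gnz) andbF.
  have [j hj] := hx y ynz.
  move: hy; rewrite hj -exprM -!FinRing.val_unitX => /val_inj /eqP.
  rewrite eq_expg_mod_order gu_ord => /eqP hm.
  have := even_card_unit h2.
  move=> /modn_dvdm hd.
  have e1 := hd (j * 2)%N; have e2 := hd k.
  have : ((j * 2) %% 2 = k %% 2)%N by rewrite -e1 -e2 hm.
  by rewrite !modn2 oddM andbF ok.
rewrite -signr_odd (negPf ok) expr0.
case: existsP => // [[]]; exists (val gu ^+ k./2).
by rewrite -exprM mulnC -{2}(odd_double_half k) (negPf ok) add0n -mul2n.
Qed.

Lemma leg0 (F : finFieldType) : legendre (0 : F) = 0.
Proof. by rewrite /legendre eqxx. Qed.

Lemma leg1 (F : finFieldType) : legendre (1 : F) = 1.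
Proof.
rewrite /legendre oner_eq0; case: existsP => // [[]]; exists 1.
by rewrite expr1n.
Qed.

Lemma legM (F : finFieldType) : (2%:R : F) != 0 ->
  forall x y : F, legendre (x * y) = legendre x * legendre y.
Proof.
move=> h2 x y.
have [x0|xnz] := eqVneq x 0; first by rewrite x0 mul0r leg0 mul0r.
have [y0|ynz] := eqVneq y 0; first by rewrite y0 mulr0 leg0 mulr0.
have [g [gnz [hx hl]]] := leg_gen h2.
have [a ->] := hx x xnz; have [b ->] := hx y ynz.
by rewrite -exprD !hl exprD.
Qed.

Lemma leg_sq1 (F : finFieldType) : (2%:R : F) != 0 ->
  forall x : F, x != 0 -> legendre x * legendre x = 1.
Proof.
move=> h2 x xnz.
have [g [gnz [hx hl]]] := leg_gen h2.
have [a ->] := hx x xnz.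
by rewrite hl -exprD -signr_odd addnn odd_double expr0.
Qed.

Lemma leg_sqr (F : finFieldType) : (2%:R : F) != 0 ->
  forall x : F, x != 0 -> legendre (x * x) = 1.
Proof. by move=> h2 x xnz; rewrite legM // leg_sq1. Qed.

Lemma legV (F : finFieldType) : (2%:R : F) != 0 ->
  forall x : F, legendre x^-1 = legendre x.
Proof.
move=> h2 x.
have [x0|xnz] := eqVneq x 0; first by rewrite x0 invr0.
have h1 : legendre x * legendre x^-1 = 1 by rewrite -legM // divff // leg1.
by rewrite -[LHS]mul1r -(leg_sq1 h2 xnz) -mulrA h1 mulr1.
Qed.

Lemma leg_nz (F : finFieldType) : (2%:R : F) != 0 ->
  forall x : F, x != 0 -> legendre x != 0.
Proof.
move=> h2 x xnz; apply/eqP=> h; have := leg_sq1 h2 xnz.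
by rewrite h mul0r => /eqP; rewrite eq_sym oner_eq0.
Qed.

Close Scope group_scope.
Open Scope ring_scope.


Lemma card_sqrt (F : finFieldType) : (2%:R : F) != 0 -> forall t : F,
  (#|[pred z : F | z ^+ 2 == t]|)%:R = 1 + legendre t :> algC.
Proof.
move=> h2 t.
have [t0|tnz] := eqVneq t 0.
  rewrite t0 leg0 addr0 (@eq_card _ _ (pred1 0)) ?card1 // => z.
  by rewrite !inE expf_eq0 andTb.
rewrite /legendre (negPf tnz); case: existsP => [[y /eqP hy]|hn].
  have ynz : y != 0 by apply/eqP=> y0; move: hy tnz; rewrite y0 expr0n => <-; rewrite eqxx.
  have yny : y != - y.
    apply/eqP=> h.
    have : y * 2%:R == 0 by rewrite mulr_natr mulr2n {1}h addNr.
    by rewrite mulf_eq0 (negPf ynz) (negPf h2).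
  rewrite (@eq_card _ _ [set y; - y]) ?cards2 ?yny //.
  move=> z; rewrite !inE -hy -subr_eq0 subr_sqr mulf_eq0 !subr_eq0.
  by rewrite addr_eq0.
rewrite eq_card0 ?subrr // => z; rewrite !inE.
by apply/negP=> h; apply: hn; exists z.
Qed.

Lemma sum_sq (F : finFieldType) : (2%:R : F) != 0 -> forall g : F -> algC,
  \sum_(z : F) g (z ^+ 2) = \sum_(t : F) (1 + legendre t) * g t.
Proof.
move=> h2 g.
transitivity (\sum_(z : F) \sum_(t : F) (if z ^+ 2 == t then g t else 0)).
  apply: eq_bigr => z _; rewrite -big_mkcond /=.
  by rewrite (big_pred1 (z ^+ 2)) // => t; rewrite /= eq_sym.
rewrite exchange_big; apply: eq_bigr => t _.
rewrite -big_mkcond /= sumr_const -card_sqrt // mulr_natl.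
by congr (_ *+ _); apply: eq_card.
Qed.

Lemma psi0 (F : finFieldType) (psi : F -> algC) : nontriv_char psi -> psi 0 = 1.
Proof.
move=> [hnz [hD _]]; apply: (mulfI (hnz 0)); by rewrite -hD addr0 mulr1.
Qed.

Lemma sum_psi (F : finFieldType) (psi : F -> algC) : nontriv_char psi ->
  \sum_(t : F) psi t = 0.
Proof.
move=> hp; have [hnz [hD [a ha]]] := hp.
have e : psi a * \sum_(t : F) psi t = \sum_(t : F) psi t.
  rewrite mulr_sumr [RHS](reindex_inj (addrI a)) /=.
  by apply: eq_bigr => t _; rewrite hD.
apply/eqP; move/eqP: e; rewrite -subr_eq0 -{2}[\sum_t _]mul1r -mulrBl mulf_eq0.
by rewrite subr_eq0 (negPf ha).
Qed.

Lemma sum_psi_lin (F : finFieldType) (psi : F -> algC) : nontriv_char psi ->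
  forall c : F, c != 0 -> \sum_(t : F) psi (c * t) = 0.
Proof.
move=> hp c cnz; transitivity (\sum_(t : F) psi t); last exact: sum_psi hp.
by rewrite [RHS](reindex_inj (mulfI cnz)).
Qed.

Lemma gauss1 (F : finFieldType) (psi : F -> algC) : (2%:R : F) != 0 ->
  nontriv_char psi -> forall d : F, d != 0 ->
  \sum_(z : F) psi (2^-1 * (d * z ^+ 2)) = legendre d * G1 psi.
Proof.
move=> h2 hp.
pose H (d : F) := \sum_(t : F) legendre t * psi (2^-1 * (d * t)).
have hH : forall d, d != 0 -> \sum_(z : F) psi (2^-1 * (d * z ^+ 2)) = H d.
  move=> d dnz; rewrite (sum_sq h2 (fun t => psi (2^-1 * (d * t)))).
  rewrite (eq_bigr (fun t => psi (2^-1 * (d * t)) + legendre t * psi (2^-1 * (d * t)))); last first.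
    by move=> t _; rewrite mulrDl mul1r.
  rewrite big_split /= (eq_bigr (fun t => psi ((2^-1 * d) * t))).
    by rewrite sum_psi_lin ?add0r // mulf_neq0 ?invr_eq0.
  by move=> t _; rewrite mulrA.
have hG : G1 psi = H 1.
  rewrite -hH ?oner_eq0 //; apply: eq_bigr => z _; by rewrite mul1r.
move=> d dnz; rewrite hH // hG /H.
rewrite (reindex_inj (mulfI (invr_neq0 dnz))) /= mulr_sumr.
apply: eq_bigr => s _.
by rewrite legM // legV // mulVKf // mul1r mulrA.
Qed.

Lemma G1_sq (F : finFieldType) (psi : F -> algC) : (2%:R : F) != 0 ->
  nontriv_char psi -> G1 psi ^+ 2 = legendre (-1 : F) * (#|F|)%:R.
Proof.
move=> h2 hp; have [hnz [hD _]] := hp.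
have h1 : G1 psi * (legendre (-1 : F) * G1 psi) = (#|F|)%:R.
  rewrite -gauss1 ?oppr_eq0 ?oner_eq0 // /G1 mulr_suml.
  transitivity (\sum_(w : F) \sum_(u : F) psi (2^-1 * u ^+ 2) * psi (u * w)).
    rewrite (eq_bigr (fun z => \sum_(w : F) psi (2^-1 * z ^+ 2) * psi (2^-1 * (-1 * w ^+ 2)))); last first.
      by move=> z _; rewrite mulr_sumr.
    rewrite exchange_big /=; apply: eq_bigr => w _.
    rewrite (reindex_inj (addrI w)) /=; apply: eq_bigr => u _.
    rewrite -!hD; congr psi.
    rewrite mulN1r mulrN -mulrBr subr_sqr [w + u]addrC addrK.
    rewrite -addrA mulrDr mulrDr -expr2; congr (_ + _).
    by rewrite -mulr2n mulrnAr -[(u * w) *+ 2]mulr_natl mulKf.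
  rewrite exchange_big /= (bigD1 0) //= [X in _ + X]big1 ?addr0.
    rewrite (eq_bigr (fun _ => 1)) ?sumr_const //.
    by move=> w _; rewrite expr0n /= mulr0 mul0r psi0 // mulr1.
  by move=> u unz; rewrite -mulr_sumr sum_psi_lin // mulr0.
have hs : legendre (-1 : F) * legendre (-1 : F) = 1 by apply: leg_sq1; rewrite ?oppr_eq0 ?oner_eq0.
by rewrite -h1 (mulrC (G1 psi)) !mulrA hs mul1r expr2.
Qed.


Definition qf (F : fieldType) k (S : 'M[F]_k) (x : 'rV[F]_k) : F := (x *m S *m x^T) 0 0.

Lemma qf_mul (F : fieldType) k (P S : 'M[F]_k) (y : 'rV[F]_k) :
  qf S (y *m P) = qf (P *m S *m P^T) y.
Proof. by rewrite /qf trmx_mul !mulmxA. Qed.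

Lemma sum_unit (F : finFieldType) k (P : 'M[F]_k) (g : 'rV[F]_k -> algC) :
  P \in unitmx -> \sum_(x : 'rV[F]_k) g x = \sum_(y : 'rV[F]_k) g (y *m P).
Proof. by move=> Pu; rewrite (reindex_inj (can_inj (mulmxK Pu))). Qed.

Lemma sum_split (F : finFieldType) m k (g : 'rV[F]_(m + k) -> algC) :
  \sum_(y : 'rV[F]_(m + k)) g y =
  \sum_(a : 'rV[F]_m) \sum_(b : 'rV[F]_k) g (row_mx a b).
Proof.
rewrite pair_big /=.
rewrite (reindex (fun p : 'rV[F]_m * 'rV[F]_k => row_mx p.1 p.2)) //=.
apply: onW_bij; exists (fun y => (lsubmx y, rsubmx y)).
  by case=> a b /=; rewrite row_mxKl row_mxKr.
by move=> y /=; rewrite hsubmxK.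
Qed.

Lemma sum_rV1 (F : finFieldType) (h : F -> algC) :
  \sum_(a : 'rV[F]_1) h (a 0 0) = \sum_(z : F) h z.
Proof.
rewrite (reindex (fun z : F => (z%:M : 'rV[F]_1))) /=.
  by apply: eq_bigr => z _; rewrite mxE eqxx mulr1n.
apply: onW_bij; exists (fun a : 'rV[F]_1 => a 0 0).
  by move=> z; rewrite mxE eqxx mulr1n.
by move=> a; rewrite -mx11_scalar.
Qed.

Lemma qf_block (F : fieldType) m k (a : 'M[F]_m) (S : 'M[F]_k) y1 y2 :
  qf (block_mx a 0 0 S) (row_mx y1 y2) = qf a y1 + qf S y2.
Proof.
rewrite /qf mul_row_block !mulmx0 addr0 add0r tr_row_mx mul_row_col.
by rewrite mxE.
Qed.

Lemma delta_mulE (F : fieldType) m n p (a : 'I_m) (b : 'I_n) (A : 'M[F]_(n, p)) c d :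
  (delta_mx a b *m A) c d = (c == a)%:R * A b d.
Proof.
rewrite mxE (bigD1 b) //= big1 ?addr0.
  by rewrite mxE eqxx andbT.
by move=> i hi; rewrite mxE (negPf hi) andbF mul0r.
Qed.

Lemma mul_deltaE (F : fieldType) m n p (a : 'I_n) (b : 'I_p) (A : 'M[F]_(m, n)) c d :
  (A *m delta_mx a b) c d = A c a * (d == b)%:R.
Proof.
rewrite mxE (bigD1 a) //= big1 ?addr0.
  by rewrite mxE eqxx.
by move=> i hi; rewrite mxE (negPf hi) mulr0.
Qed.

Lemma addmxE (F : fieldType) m n (A B : 'M[F]_(m, n)) i j :
  (A + B) i j = A i j + B i j.
Proof. by rewrite mxE. Qed.

Lemma perm_case (F : fieldType) k (T : 'M[F]_k.+1) (j : 'I_k.+1) :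
  T j j != 0 -> exists P : 'M[F]_k.+1, P \in unitmx /\ (P *m T *m P^T) 0 0 != 0.
Proof.
move=> hj; exists (perm_mx (tperm 0 j)); split; first exact: unitmx_perm.
by rewrite tr_perm_mx -col_permE -row_permE !mxE tpermL.
Qed.

Lemma exists_nz_diag (F : fieldType) k (S : 'M[F]_k.+1) :
  (2%:R : F) != 0 -> S^T = S -> S != 0 ->
  exists P : 'M[F]_k.+1, P \in unitmx /\ (P *m S *m P^T) 0 0 != 0.
Proof.
move=> h2 hS Snz.
case: (pickP (fun j => S j j != 0)) => [j hj | hall]; first exact: perm_case hj.
have : ~~ [forall i, forall j, S i j == 0].
  apply: contra Snz => /forallP h; apply/eqP/matrixP => i j; rewrite mxE.
  exact/eqP/(forallP (h i) j).
rewrite negb_forall => /existsP [i]; rewrite negb_forall => /existsP [j hij].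
have hsym : forall a b, S b a = S a b.
  by move=> a b; rewrite -{1}hS mxE.
have ij : j != i.
  by apply/eqP=> e; move: (hall i); rewrite /= -{2}e hij.
pose P1 : 'M[F]_k.+1 := 1%:M + delta_mx i j.
have P1u : P1 \in unitmx.
  have : P1 *m (1%:M - delta_mx i j) = 1%:M.
    rewrite /P1 mulmxDl mulmxBr mulmxBr !mul1mx mulmx1 mul_delta_mx_0 //.
    by rewrite subr0 subrK.
  by case/mulmx1_unit.
pose T := P1 *m S *m P1^T.
have hT : T^T = T by rewrite /T !trmx_mul trmxK hS mulmxA.
have Tii : T i i != 0.
  rewrite /T /P1 linearD /= trmx1 trmx_delta mulmxDl !mulmxDr !mul1mx !mulmx1.
  rewrite mulmxDl -mulmxA !addmxE delta_mulE !mul_deltaE delta_mulE !eqxx !mul1r !mulr1.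
  rewrite mul_deltaE eqxx mulr1.
  have := hall j; rewrite /= => /negbFE /eqP ->.
  have := hall i; rewrite /= => /negbFE /eqP ->.
  rewrite add0r addr0 hsym -mulr2n -mulr_natr mulf_eq0 negb_or hij h2 //.
have [P2 [P2u hP2]] := perm_case Tii.
exists (P2 *m P1); split; first by rewrite unitmx_mul P2u P1u.
by move: hP2; rewrite /T trmx_mul !mulmxA.
Qed.

Lemma elim_block (F : fieldType) k (T : 'M[F]_(1 + k)) :
  T^T = T -> T 0 0 != 0 ->
  exists E : 'M[F]_(1 + k), E \in unitmx /\ exists S' : 'M[F]_k, S'^T = S' /\
    E *m T *m E^T = block_mx (T 0 0)%:M 0 0 S'.
Proof.
move=> hT t0.
set t := T 0 0.
set u := ursubmx T.
have ha : ulsubmx T = t%:M.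
  rewrite [LHS]mx11_scalar; congr (_%:M); rewrite !mxE /t; congr (T _ _); apply: val_inj => //.
have hd : dlsubmx T = u^T by rewrite trmx_ursub hT.
pose w := t^-1 *: u^T.
pose E : 'M[F]_(1 + k) := block_mx 1%:M 0 (- w) 1%:M.
exists E; split.
  by rewrite unitmxE /E det_lblock !det1 mul1r unitr1.
exists (drsubmx T - w *m u); split.
  by rewrite linearB /= trmx_mul /w linearZ /= trmxK trmx_drsub hT -scalemxAr -scalemxAl.
rewrite -[X in _ *m X *m _]submxK ha hd /E tr_block_mx !mulmx_block.
rewrite !trmx1 !trmx0 !mul1mx !mul0mx !mulmx1 !mulmx0 !addr0 ?add0r -/u.
have e1 : - w *m t%:M + u^T = 0.
  by rewrite scalar_mxC mul_scalar_mx /w scalerN scalerA mulfV // scale1r addNr.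
have e2 : t%:M *m (- w)^T + u = 0.
  by rewrite mul_scalar_mx /w linearN /= linearZ /= trmxK scalerN scalerA mulfV // scale1r addNr.
by rewrite e1 e2 mul0mx add0r mulNmx addrC.
Qed.

Lemma qf_scalar1 (F : fieldType) (t : F) (a : 'rV[F]_1) :
  qf (t%:M : 'M[F]_1) a = t * (a 0 0) ^+ 2.
Proof.
rewrite /qf mul_mx_scalar -scalemxAl mxE mxE big_ord1 !mxE.
by rewrite expr2 mulrA.
Qed.

Lemma gaussQ (F : finFieldType) (psi : F -> algC) : (2%:R : F) != 0 ->
  nontriv_char psi -> forall k (S : 'M[F]_k), S^T = S -> \det S != 0 ->
  \sum_(x : 'rV[F]_k) psi (2^-1 * qf S x) = G1 psi ^+ k * legendre (\det S).
Proof.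
move=> h2 hp; have [hnz [hD _]] := hp.
elim=> [|k IH] S hS dS.
  rewrite (bigD1 0) //= big1 ?addr0; last by move=> x; rewrite thinmx0 eqxx.
  rewrite det_mx00 leg1 expr0 mulr1 /qf mxE big_ord0 mulr0 psi0 //.
have Snz : S != 0 by apply: contraNneq dS => ->; rewrite det0.
have [P1 [P1u hP1]] := exists_nz_diag h2 hS Snz.
pose T : 'M[F]_(1 + k) := P1 *m S *m P1^T.
have hT : T^T = T by rewrite /T !trmx_mul trmxK hS mulmxA.
have [E [Eu [S' [hS' hE]]]] := elim_block hT hP1.
set t := T 0 0 in hE.
pose P : 'M[F]_(1 + k) := E *m P1.
have Pu : P \in unitmx by rewrite unitmx_mul Eu P1u.
have hPD : P *m S *m P^T = block_mx t%:M 0 0 S'.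
  by rewrite -hE /T /P trmx_mul !mulmxA.
have dD : \det (block_mx (t%:M : 'M[F]_1) 0 0 S') = \det P * \det P * \det S.
  by rewrite -hPD det_mulmx det_mulmx det_tr mulrAC.
have dPnz : \det P != 0 by rewrite -unitfE -unitmxE.
have dS' : \det S' != 0.
  apply/eqP=> h; move: dD; rewrite det_ublock h mulr0 => /eqP.
  by rewrite eq_sym !mulf_eq0 (negPf dPnz) (negPf dS).
rewrite (sum_unit _ Pu).
rewrite (eq_bigr (fun y => psi (2^-1 * qf (block_mx t%:M 0 0 S') y))); last first.
  by move=> y _; rewrite qf_mul hPD.
rewrite sum_split.
rewrite (eq_bigr (fun a : 'rV[F]_1 => psi (2^-1 * (t * (a 0 0) ^+ 2)) * (G1 psi ^+ k * legendre (\det S')))); last first.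
  move=> a _; rewrite -(IH S' hS' dS') mulr_sumr; apply: eq_bigr => b _.
  by rewrite qf_block mulrDr hD qf_scalar1.
rewrite -mulr_suml (sum_rV1 (fun z => psi (2^-1 * (t * z ^+ 2)))).
have tnz : t != 0 by exact: hP1.
rewrite gauss1 //.
have hl : legendre (\det S) = legendre t * legendre (\det S').
  have e : t * \det S' = \det P * \det P * \det S by rewrite -dD det_ublock det_scalar1.
  by rewrite -legM // e legM // leg_sqr // mul1r.
by rewrite hl exprS [legendre t * _]mulrC mulrACA.
Qed.


Lemma omegaDl (F : finFieldType) n (J : 'M[F]_(n + n)) u v w :
  omega J (u + v) w = omega J u w + omega J v w.
Proof. by rewrite /omega !mulmxDl mxE. Qed.

Lemma omegaDr (F : finFieldType) n (J : 'M[F]_(n + n)) u v w :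
  omega J w (u + v) = omega J w u + omega J w v.
Proof. by rewrite /omega linearD /= mulmxDr mxE. Qed.

Lemma omegaNl (F : finFieldType) n (J : 'M[F]_(n + n)) u w :
  omega J (- u) w = - omega J u w.
Proof. by rewrite /omega !mulNmx mxE. Qed.

Lemma omegaNr (F : finFieldType) n (J : 'M[F]_(n + n)) u w :
  omega J w (- u) = - omega J w u.
Proof. by rewrite /omega linearN /= mulmxN mxE. Qed.

Lemma omega0l (F : finFieldType) n (J : 'M[F]_(n + n)) w : omega J 0 w = 0.
Proof. by rewrite /omega !mul0mx mxE. Qed.

Lemma omega0r (F : finFieldType) n (J : 'M[F]_(n + n)) w : omega J w 0 = 0.
Proof. by rewrite /omega trmx0 mulmx0 mxE. Qed.

Lemma omega_mul (F : finFieldType) n (J : 'M[F]_(n + n)) m1 m2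
  (X : 'M[F]_(m1, n + n)) (Y : 'M[F]_(m2, n + n)) x y :
  omega J (x *m X) (y *m Y) = (x *m (X *m J *m Y^T) *m y^T) 0 0.
Proof. by rewrite /omega trmx_mul !mulmxA. Qed.

Lemma omega_mx (F : finFieldType) n (J : 'M[F]_(n + n)) (X Y : 'M[F]_(n, n + n)) :
  \matrix_(i < n, j < n) omega J (row i X) (row j Y) = X *m J *m Y^T.
Proof.
apply/matrixP => i j; rewrite mxE !rowE omega_mul.
rewrite trmx_delta mul_deltaE delta_mulE !eqxx mul1r mulr1.
done.
Qed.

Lemma iso_mx (F : finFieldType) n (J : 'M[F]_(n + n)) (X : 'M[F]_(n, n + n)) :
  olag J X -> X *m J *m X^T = 0.
Proof.
move=> [_ hX]; rewrite -omega_mx; apply/matrixP => i j.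
by rewrite !mxE hX ?row_sub.
Qed.

Lemma J_anti (F : finFieldType) n (J : 'M[F]_(n + n)) :
  symplectic J -> J^T = - J.
Proof.
move=> [hal _]; apply/matrixP => i j.
have e : forall a b : 'I_(n + n), omega J (delta_mx 0 a) (delta_mx 0 b) = J a b.
  by move=> a b; rewrite /omega trmx_delta mul_deltaE delta_mulE !eqxx mul1r mulr1.
have := hal (delta_mx 0 i + delta_mx 0 j).
rewrite omegaDl !omegaDr hal hal add0r addr0 !e => /eqP.
by rewrite addr_eq0 !mxE => /eqP ->; rewrite opprK.
Qed.

Lemma cap0 (F : finFieldType) n (X Y : 'M[F]_(n, n + n)) :
  row_free X -> row_free Y -> (1%:M <= X + Y)%MS ->
  forall v : 'rV[F]_(n + n), (v <= X)%MS -> (v <= Y)%MS -> v = 0.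
Proof.
move=> fX fY hXY v vX vY.
have hr := mxrank_sum_cap X Y.
have r1 : (n + n <= \rank (X + Y))%N by rewrite -{1}(mxrank1 F (n + n)) mxrankS.
move: fX fY; rewrite /row_free => /eqP rX /eqP rY.
have : \rank (X :&: Y)%MS = 0%N.
  move: hr r1; rewrite rX rY.
  generalize (\rank (X :&: Y)%MS) (\rank (X + Y)%MS) => a b hr r1.
  by move: r1; rewrite -hr -{2}[b]addn0 leq_add2l leqn0 => /eqP.
move/eqP; rewrite mxrank_eq0 => /eqP h0.
have : (v <= X :&: Y)%MS by rewrite sub_capmx vX vY.
by rewrite h0 submx0 => /eqP.
Qed.

Lemma hmul_split (F : finFieldType) n (J : 'M[F]_(n + n)) (m mN mL y : 'rV[F]_(n + n))
  (h : heis F n) :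
  m = mN + mL -> omega J mN y = 0 ->
  hmul J (m, 0) (hmul J (y, 0) h) =
  hmul J (hmul J (0, - (2^-1 * omega J mL mN)) (mL, 0)) (hmul J (mN + y, 0) h).
Proof.
move=> -> hNy; case: h => h1 h2; rewrite /hmul /=; congr pair.
  by rewrite add0r [mN + mL]addrC -!addrA.
rewrite !omegaDl !omegaDr !omega0l hNy !add0r !addr0 !mulrDr.
set A := 2^-1 * omega J y h1; set B := 2^-1 * omega J mN h1.
set C := 2^-1 * omega J mL h1; set E := 2^-1 * omega J mL y.
set G := 2^-1 * omega J mL mN.
rewrite mulr0 addr0 [- G + _]addrC -[_ + - G + _]addrA [- G + _]addrA addKr.
by rewrite -!addrA [B + (A + _)]addrCA.
Qed.

Lemma sum_sub (F : finFieldType) N m (X : 'M[F]_(m, N)) (g : 'rV[F]_N -> algC) :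
  row_free X -> \sum_(v : 'rV[F]_N | (v <= X)%MS) g v = \sum_(x : 'rV[F]_m) g (x *m X).
Proof.
move=> fX.
rewrite (reindex (fun x : 'rV[F]_m => x *m X)) /=.
  by apply: eq_bigl => x; rewrite submxMl.
exists (fun v => v *m pinvmx X).
  by move=> x _; rewrite mulmxKp.
by move=> v; rewrite inE => hv; rewrite mulmxKpV.
Qed.

Lemma sum_sub_shift (F : finFieldType) N m (X : 'M[F]_(m, N)) (c : 'rV[F]_N)
  (g : 'rV[F]_N -> algC) : (c <= X)%MS ->
  \sum_(v : 'rV[F]_N | (v <= X)%MS) g (c + v) = \sum_(v : 'rV[F]_N | (v <= X)%MS) g v.
Proof.
move=> cX; rewrite [RHS](reindex_inj (addrI c)) /=; apply: eq_bigl => v.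
apply/idP/idP => hv; first by rewrite addmx_sub.
have -> : v = (c + v) - c by rewrite addrC addKr.
by rewrite addmx_sub // eqmx_opp.
Qed.

Lemma compose (F : finFieldType) n (J : 'M[F]_(n + n)) (psi : F -> algC)
  (BN BM BL : 'M[F]_(n, n + n)) (A B : 'M[F]_n) :
  olag J BN -> row_free BM -> BM = A *m BN + B *m BL ->
  forall f, inH J psi BL f -> forall h,
  Tmap J psi BN BM (Tmap J psi BM BL f) h =
  Acoef J psi BN BM * Acoef J psi BM BL *
  (\sum_(x : 'rV[F]_n) psi (- (2^-1 * omega J (x *m B *m BL) (x *m A *m BN)))) *
  \sum_(y : 'rV[F]_(n + n) | (y <= BN)%MS) f (hmul J (y, 0) h).
Proof.
move=> hN fM hdec f hf h.
rewrite /Tmap /Fmap.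
set a1 := Acoef J psi BN BM; set a2 := Acoef J psi BM BL.
rewrite -mulr_sumr -[RHS]mulrA -[RHS]mulrA; congr (_ * (_ * _)).
pose K x := psi (- (2^-1 * omega J (x *m B *m BL) (x *m A *m BN))).
transitivity (\sum_(y : 'rV[F]_(n + n) | (y <= BN)%MS) \sum_(x : 'rV[F]_n)
   K x * f (hmul J (x *m A *m BN + y, 0) h)).
  apply: eq_bigr => y hy; rewrite (sum_sub _ fM); apply: eq_bigr => x _.
  rewrite (@hmul_split _ _ J (x *m BM) (x *m A *m BN) (x *m B *m BL) y h).
  - by rewrite hf ?submxMl.
  - by rewrite hdec mulmxDr !mulmxA.
  - by case: hN => _ hN; rewrite hN ?submxMl.
rewrite exchange_big mulr_suml; apply: eq_bigr => x _.
rewrite -mulr_sumr; congr (_ * _).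
by rewrite (sum_sub_shift (fun v => f (hmul J (v, 0) h))) ?submxMl.
Qed.


Lemma final_alg n (g q sA sB sP sm : algC) : q != 0 -> g ^+ 2 = sm * q ->
  sm * sm = 1 -> sA * sA = 1 -> sB * sB = 1 -> sP * sP = 1 ->
  (g / q) ^+ n * sP =
  (g / q) ^+ n * (sB * sP) * ((g / q) ^+ n * (sP * sA)) *
  (g ^+ n * (sm ^+ n * sB * sP * sA)).
Proof.
move=> qnz hg hm hA hB hP.
have e : (g / q) ^+ n * g ^+ n * sm ^+ n = 1.
  by rewrite -!exprMn [g / q * g]mulrAC -expr2 hg mulfK // hm expr1n.
rewrite [RHS](@GRing.mul algC).[AC (((1*2)*(1*2))*(1*4)) ((1*3)*((4*7*8)*((2*9)*((5*10)*(6*11)))))].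
by rewrite e hB hP hA !mulr1.
Qed.

Lemma oppmxE (F : fieldType) m n (M : 'M[F]_(m, n)) i j : (- M) i j = - M i j.
Proof. by rewrite mxE. Qed.

Lemma legX (F : finFieldType) : (2%:R : F) != 0 -> forall (x : F) k,
  legendre (x ^+ k) = legendre x ^+ k.
Proof.
move=> h2 x; elim=> [|k IH]; first by rewrite !expr0 leg1.
by rewrite !exprS legM // IH.
Qed.

Lemma leg_wedge (F : finFieldType) n (J : 'M[F]_(n + n)) (X Y : 'M[F]_(n, n + n)) :
  legendre ((-1) ^+ (n * (n - 1) %/ 2)%N * omega_wedge J X Y) =
  legendre (\det (X *m J *m Y^T)).
Proof.
rewrite /omega_wedge omega_mx mulrA -exprD addnn -signr_odd odd_double expr0.
by rewrite mul1r.
Qed.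

Lemma G_unit (F : finFieldType) n (X Y : 'M[F]_(n, n + n)) :
  gen_pos X Y -> col_mx X Y \in unitmx.
Proof. by rewrite /gen_pos addsmxE sub1mx row_full_unit. Qed.

Lemma detP_nz (F : finFieldType) n (J : 'M[F]_(n + n)) (BN BL : 'M[F]_(n, n + n)) :
  symplectic J -> olag J BL -> gen_pos BN BL -> \det (BL *m J *m BN^T) != 0.
Proof.
move=> [_ hnd] oL gNL; have [fL _] := oL.
apply/negP => /det0P [v vnz hv].
have e1 : v *m BL *m J *m BN^T = 0 by rewrite !mulmxA in hv.
have e2 : v *m BL *m J *m BL^T = 0.
  by have := congr1 (mulmx v) (iso_mx oL); rewrite mulmx0 !mulmxA.
have hlJ : v *m BL *m J = 0.
  have e : v *m BL *m J *m (col_mx BN BL)^T = 0.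
    by rewrite tr_col_mx mul_mx_row e1 e2 row_mx0.
  have := congr1 (mulmx^~ (invmx (col_mx BN BL)^T)) e.
  by rewrite mulmxK ?unitmx_tr ?G_unit // mul0mx.
have l0 : v *m BL = 0 by apply: hnd => w; rewrite /omega hlJ mul0mx mxE.
move/eqP: vnz; apply; apply: (row_free_inj fL); by rewrite l0 mul0mx.
Qed.

Lemma detAB_nz (F : finFieldType) n (X Y Z : 'M[F]_(n, n + n)) (A B : 'M[F]_n) :
  row_free Y -> row_free Z -> (1%:M <= Y + Z)%MS -> Y = A *m X + B *m Z ->
  \det A != 0.
Proof.
move=> fY fZ gYZ hdec; apply/negP => /det0P [v vnz hv].
have e : v *m Y = (v *m B) *m Z by rewrite hdec mulmxDr !mulmxA hv mul0mx add0r.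
have : v *m Y = 0.
  by apply: (cap0 fY fZ gYZ); rewrite ?submxMl // e submxMl.
move=> h0; move/eqP: vnz; apply; apply: (row_free_inj fY); by rewrite h0 mul0mx.
Qed.

Theorem mainTheorem1 (F : finFieldType) (n : nat) (J : 'M[F]_(n + n))
  (psi : F -> algC) (BN BM BL : 'M[F]_(n, n + n)) :
  (2%:R : F) != 0 ->
  symplectic J ->
  nontriv_char psi ->
  olag J BN -> olag J BM -> olag J BL ->
  gen_pos BN BM -> gen_pos BM BL -> gen_pos BN BL ->
  forall f : heis F n -> algC, inH J psi BL f ->
    Tmap J psi BN BL f =1 Tmap J psi BN BM (Tmap J psi BM BL f).
Proof.
move=> h2 hsym hpsi oN oM oL gNM gML gNL f hf h.
have [fN _] := oN; have [fM _] := oM; have [fL _] := oL.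
have Gu := G_unit gNL.
pose C := BM *m invmx (col_mx BN BL).
pose A := lsubmx C; pose B := rsubmx C.
have hdec : BM = A *m BN + B *m BL.
  by rewrite -mul_row_col hsubmxK /C mulmxKV.
rewrite (compose oN fM hdec hf).
have [P eP] : exists P, P = BL *m J *m BN^T by eexists.
have Ja := J_anti hsym.
have iN := iso_mx oN; have iM := iso_mx oM; have iL := iso_mx oL.
have dNM : BM *m J *m BN^T = B *m P.
  have t1 : A *m BN *m J *m BN^T = 0 by rewrite -!mulmxA (mulmxA BN) iN mulmx0.
  by rewrite hdec !mulmxDl t1 add0r eP -!mulmxA.
have dML : BL *m J *m BM^T = P *m A^T.
  have t2 : BL *m J *m (BL^T *m B^T) = 0 by rewrite mulmxA iL mul0mx.
  by rewrite hdec linearD /= !trmx_mul mulmxDr t2 addr0 eP !mulmxA.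
have dNL' : BN *m J *m BL^T = - P^T.
  by rewrite eP !trmx_mul trmxK Ja mulNmx mulmxN opprK mulmxA.
have dMLt : BM *m J *m BL^T = - (A *m P^T).
  have t3 : B *m BL *m J *m BL^T = 0 by rewrite -!mulmxA (mulmxA BL) iL mulmx0.
  by rewrite hdec !mulmxDl t3 addr0 -!mulmxA (mulmxA BN) dNL' mulmxN.
have hQ : BM *m J *m BM^T = B *m P *m A^T - A *m P^T *m B^T.
  rewrite {2}hdec linearD /= !trmx_mul mulmxDr !mulmxA dNM.
  by rewrite dMLt mulNmx.
pose S0 := - (B *m P *m A^T).
have hS0 : S0^T = S0.
  have e : B *m P *m A^T = A *m P^T *m B^T.
    by apply/eqP; rewrite -subr_eq0 -hQ iM.
  by rewrite /S0 linearN /= !trmx_mul !trmxK !mulmxA e.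
have dP : \det P != 0 by rewrite eP detP_nz.
have dA : \det A != 0 by apply: (detAB_nz fM fL gML hdec).
have dB : \det B != 0.
  apply: (detAB_nz (X := BL) (A := B) (B := A) fM fN); first by rewrite addsmxC.
  by rewrite hdec addrC.
have hdS0 : \det S0 = (-1) ^+ n * \det B * \det P * \det A.
  by rewrite /S0 -scaleN1r detZ !det_mulmx det_tr !mulrA.
have dS0 : \det S0 != 0.
  by rewrite hdS0 !mulf_neq0 // expf_neq0 // oppr_eq0 oner_eq0.
have hK : \sum_(x : 'rV[F]_n) psi (- (2^-1 * omega J (x *m B *m BL) (x *m A *m BN)))
    = G1 psi ^+ n * legendre (\det S0).
  rewrite -(gaussQ h2 hpsi hS0 dS0); apply: eq_bigr => x _; congr psi.
  rewrite omega_mul -eP /qf /S0 mulmxN mulNmx oppmxE mulrN; congr (- (_ * _)).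
  by rewrite trmx_mul !mulmxA.
rewrite hK /Tmap /Fmap; congr (_ * _).
rewrite /Acoef !leg_wedge -eP dNM dML !det_mulmx det_tr hdS0.
rewrite !legM // legX //.
apply: final_alg.
- by rewrite pnatr_eq0; have := finNzRing_gt1 F; case: #|F|.
- exact: G1_sq.
- by apply: leg_sq1; rewrite // oppr_eq0 oner_eq0.
- exact: leg_sq1.
- exact: leg_sq1.
- exact: leg_sq1.
Qed.
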